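(* For the Rogers--Szeg\H{o} polynomials, we have \[ \mu_{n,m} = \begin{bmatrix} n \\ m \end{bmatrix}_q q^{\frac{(n-m)^2}{2}}, \] where \( \begin{bmatrix} n \\ m \end{bmatrix}_q \) is the \( q \)-binomial coefficient given by \( \begin{bmatrix} n \\ m \end{bmatrix}_q =\frac{(1-q^n)(1-q^{n-1})\cdots(1-q^{n-m+1})}{(1-q^m)(1-q^{m-1})\cdots(1-q)} \).
   Context: Let \( (\Phi_n(z))_{n\ge0} \) be monic orthogonal polynomials on the unit circle (OPUC) with \( \deg\Phi_n=n \), \( \Phi_0=1 \), satisfying Szeg\H{o}'s recurrence \( \Phi_{n+1}(z) = z\Phi_n(z) - \overline{\alpha_n}\Phi_n^*(z) \), where \( \Phi_n^*(z)=z^n\overline{\Phi_n}(1/z) \) is the reverse polynomial and \( (\alpha_n)_{n\ge0} \) are the Verblunsky coefficients with \( |\alpha_n|<1 \). They are orthogonal with respect to the linear functional \( \mathcal{L} \) on Laurent polynomials with \( \mathcal{L}(1)=1 \) and \( \mathcal{L}(\Phi_m(z)\overline{\Phi_n}(1/z))=\kappa_n\delta_{m,n} \), \( \kappa_n>0 \). Define the inner product \( \langle f(z),g(z)\rangle=\mathcal{L}(f(z)\overline{g}(1/z)) \), the generalized moment \( \mu_{n,r,s}=\langle \Phi_s(z),z^n\Phi_r(z)\rangle/\langle\Phi_s(z),\Phi_s(z)\rangle \), and \( \mu_{n,m}=\mu_{n,0,m} \). For \( q\in(0,1) \), the Rogers--Szeg\H{o} polynomials are the OPUC with Verblunsky coefficients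 \( \alpha_n=(-1)^nq^{(n+1)/2} \), \( n\ge0 \). *)

(* Defs.v *)
From HB Require Import structures.
From mathcomp Require Import all_boot all_order all_algebra.
Set Implicit Arguments. Unset Strict Implicit. Unset Printing Implicit Defensive.
Import Order.TTheory GRing.Theory Num.Theory.
Local Open Scope ring_scope.

(* Reverse polynomial Phi^*_n(z) = z^n conj(Phi_n)(1/z), for deg p <= n. *)
Definition revp (C : numClosedFieldType) (n : nat) (p : {poly C}) : {poly C} :=
  \poly_(i < n.+1) (p`_(n - i))^*.

Fixpoint OPUC (C : numClosedFieldType) (alpha : nat -> C) (n : nat) : {poly C} :=
  match n with
  | 0 => 1
  | n'.+1 => 'X * OPUC alpha n' - (alpha n')^* *: revp n' (OPUC alpha n')
  end.

(* A linear functional L on Laurent polynomials is given by its moments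
   c k = L(z^k), k : int.  Then
   <f, g> = L(f(z) conj(g)(1/z)) = sum_{i,j} f_i conj(g_j) c (i - j). *)
Definition ipL (C : numClosedFieldType) (c : int -> C) (f g : {poly C}) : C :=
  \sum_(i < size f) \sum_(j < size g)
     f`_i * (g`_j)^* * c (i%:Z - j%:Z).

Definition gmoment (C : numClosedFieldType) (c : int -> C) (alpha : nat -> C)
    (n r s : nat) : C :=
  ipL c (OPUC alpha s) ('X^n * OPUC alpha r) / ipL c (OPUC alpha s) (OPUC alpha s).

Definition moment (C : numClosedFieldType) (c : int -> C) (alpha : nat -> C)
    (n m : nat) : C := gmoment c alpha n 0 m.

Definition rs_alpha (C : numClosedFieldType) (q : C) (n : nat) : C :=
  (-1) ^+ n * (sqrtC q) ^+ n.+1.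

Definition qbinom (C : numClosedFieldType) (q : C) (n m : nat) : C :=
  (\prod_(i < m) (1 - q ^+ (n - i))) / (\prod_(i < m) (1 - q ^+ (m - i))).

(* Main.v *)
Require Import Defs.
From HB Require Import structures.
From mathcomp Require Import all_boot all_order all_algebra.
From mathcomp Require Import ring lra zify.
Import Order.TTheory GRing.Theory Num.Theory.
Set Implicit Arguments. Unset Strict Implicit. Unset Printing Implicit Defensive.
Local Open Scope ring_scope.

Fixpoint gb (C : numClosedFieldType) (q : C) (N k : nat) : C :=
  match N, k with
  | 0, 0 => 1
  | 0, _ => 0
  | N'.+1, 0 => 1
  | N'.+1, k'.+1 => gb q N' k' + q ^+ k'.+1 * gb q N' k'.+1
  end.

Definition qf (C : numClosedFieldType) (q : C) (n : nat) : C :=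
  \prod_(i < n) (1 - q ^+ i.+1).

Lemma qfS (C : numClosedFieldType) (q : C) n : qf q n.+1 = qf q n * (1 - q ^+ n.+1).
Proof. by rewrite /qf big_ord_recr. Qed.

Lemma qf0 (C : numClosedFieldType) (q : C) : qf q 0 = 1.
Proof. by rewrite /qf big_ord0. Qed.

Lemma gb_gt (C : numClosedFieldType) (q : C) N k : (N < k)%N -> gb q N k = 0.
Proof.
elim: N k => [|N IH] [|k] //= H.
by rewrite !IH ?mulr0 ?addr0 // ltnW.
Qed.

Lemma gbS0 (C : numClosedFieldType) (q : C) N : gb q N 0 = 1.
Proof. by case: N. Qed.

Lemma gb_nn (C : numClosedFieldType) (q : C) N : gb q N N = 1.
Proof. by elim: N => //= N ->; rewrite gb_gt // mulr0 addr0. Qed.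

Lemma gb_cf (C : numClosedFieldType) (q : C) N k : (k <= N)%N ->
  gb q N k * (qf q k * qf q (N - k)) = qf q N.
Proof.
elim: N k => [|N IH] [|k] //= H.
- by rewrite qf0 !mul1r.
- by rewrite qf0 subn0 !mul1r.
- rewrite subSS qfS.
  have H1 := IH k H.
  case: (ltnP k N) => [Hlt|Hge]; last first.
    have Heq : k = N by lia.
    subst k. rewrite subnn qf0 in H1. 
    rewrite (@gb_gt _ _ N N.+1) // subnn qf0 qfS gb_nn; ring.
  have H2 := IH k.+1 Hlt.
  have [d Hd] : exists d, N = (k + d.+1)%N by exists (N - k.+1)%N; lia.
  subst N.
  have E1 : (k + d.+1 - k = d.+1)%N by lia.
  have E2 : (k + d.+1 - k.+1 = d)%N by lia.
  rewrite E1 E2 in H1 H2 *. rewrite qfS in H1 *. rewrite qfS in H2.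
  rewrite qfS.
  have -> : qf q (k + d.+1) * (1 - q ^+ (k + d.+1).+1) = qf q (k+d.+1) * (1 - q^+k.+1) + q^+k.+1 * qf q (k+d.+1) * (1 - q^+d.+1).
    have -> : ((k + d.+1).+1 = k.+1 + d.+1)%N by lia.
    rewrite exprD; ring.
  rewrite -{1}H1 -H2; ring.
Qed.

Lemma qf_neq0 (C : numClosedFieldType) (q : C) n : 0 < q -> q < 1 -> qf q n != 0.
Proof.
move=> h0 h1; apply/prodf_neq0 => i _.
rewrite subr_eq0 eq_sym lt_eqF // exprn_ilt1 ?ltW //.
Qed.

Lemma gb_div (C : numClosedFieldType) (q : C) N k : 0 < q -> q < 1 -> (k <= N)%N ->
  gb q N k = qf q N / (qf q k * qf q (N - k)).
Proof.
move=> h0 h1 hk; rewrite -(gb_cf q hk) mulfK // mulf_neq0 // qf_neq0 //.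
Qed.

Lemma gb_sym (C : numClosedFieldType) (q : C) N k : 0 < q -> q < 1 -> (k <= N)%N ->
  gb q N (N - k) = gb q N k.
Proof.
move=> h0 h1 hk; by rewrite !gb_div ?leq_subr // subKn // [qf q k * _]mulrC.
Qed.

Lemma gb_rev (C : numClosedFieldType) (q : C) n k t : 0 < q -> q < 1 -> (k + t <= n)%N ->
  gb q n (k + t) * gb q (k + t) k = gb q n k * gb q (n - k) t.
Proof.
move=> h0 h1 hk.
have [d ->] : exists d, n = (k + t + d)%N by exists (n - (k + t))%N; lia.
rewrite !gb_div ?leq_addr //; try lia.
have -> : (k + t + d - (k + t) = d)%N by lia.
have -> : (k + t - k = t)%N by lia.
have -> : (k + t + d - k = t + d)%N by lia.
have -> : (t + d - t = d)%N by lia.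
have H1 := qf_neq0 (k + t) h0 h1; have H2 := qf_neq0 k h0 h1.
have H3 := qf_neq0 d h0 h1; have H4 := qf_neq0 t h0 h1.
have H5 := qf_neq0 (t + d) h0 h1.
by field; rewrite H1 H2 H3 H4 H5.
Qed.

Lemma gb_real (C : numClosedFieldType) (q : C) N k : q \is Num.real -> gb q N k \is Num.real.
Proof.
move=> hq; elim: N k => [|N IH] [|k] //=; rewrite ?rpred0 ?rpred1 //.
by rewrite rpredD ?rpredM ?rpredX ?IH.
Qed.

Lemma rs_alpha_conj (C : numClosedFieldType) (q : C) m : 0 < q ->
  (rs_alpha q m)^* = rs_alpha q m.
Proof.
move=> h0; apply: conj_Creal.
by rewrite /rs_alpha rpredM ?rpredX ?rpredN ?rpred1 // sqrtC_real // ltW.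
Qed.

Lemma Phi_coef (C : numClosedFieldType) (q : C) m k : 0 < q -> q < 1 ->
  (OPUC (rs_alpha q) m)`_k = gb q m k * (- sqrtC q) ^+ (m - k).
Proof.
move=> h0 h1.
have qr : q \is Num.real by apply: gtr0_real.
elim: m k => [|m IH] k.
  rewrite /= coef1; case: k => [|k] /=; first by rewrite subnn expr0 mulr1.
  by rewrite mul0r.
rewrite /= coefB coefXM coefZ /revp coef_poly rs_alpha_conj //.
case: k => [|k] /=.
  rewrite IH subn0 subnn gb_nn conj_Creal; last first.
    by rewrite rpredM ?rpredX ?rpredN ?rpred1 // sqrtC_real // ltW.
  by rewrite /rs_alpha subn0 expr0 !exprS [in RHS]exprNn; ring.
rewrite IH subSS.
case: (ltnP k m) => hkm.
  rewrite ltnS hkm IH.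
  have [d Hd] : exists d, m = (k + d.+1)%N by exists (m - k.+1)%N; lia.
  have -> : (m - (m - k.+1) = k.+1)%N by lia.
  rewrite gb_sym // conj_Creal; last first.
    by rewrite rpredM ?rpredX ?rpredN ?rpred1 ?gb_real // sqrtC_real // ltW.
  rewrite /rs_alpha -[in q ^+ k.+1](sqrtCK q).
  set s := sqrtC q.
  have E : (-1) ^+ m * s ^+ m.+1 = (- s) ^+ m * s by rewrite exprSr mulrA -exprNn.
  rewrite E; set t := - s.
  have -> : s = - t by rewrite /t opprK.
  rewrite Hd.
  have -> : (k + d.+1 - k = d.+1)%N by lia.
  rewrite sqrrN -exprM mulnC exprM expr2 exprD !exprS; ring.
rewrite ltnS ltnNge hkm /= mulr0 subr0 (@gb_gt _ q m k.+1) ?mulr0 ?addr0 //.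
Qed.

Definition Pq (C : numClosedFieldType) (q : C) N : {poly C} :=
  \prod_(j < N) ((q ^+ j)%:P - 'X).

Lemma Pq_coef (C : numClosedFieldType) (q : C) N t :
  (Pq q N)`_t * sqrtC q ^+ N = gb q N t * (-1) ^+ t * sqrtC q ^+ ((N - t) ^ 2 + t).
Proof.
set s := sqrtC q.
have qs : q = s ^+ 2 by rewrite sqrtCK.
elim: N t => [|N IH] t.
  rewrite /Pq big_ord0 coef1; case: t => [|t] /=; first by rewrite !expr0 !mulr1.
  by rewrite !mul0r.
rewrite /Pq big_ord_recr /= -/(Pq q N) mulrBr coefB coefMC coefMX.
case: t => [|t] /=.
  have := IH 0%N; rewrite !subn0 !expr0 !mulr1 /= => IH0.
  rewrite gbS0 addn0 mul1r in IH0.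
  rewrite subr0 addn0 [in q ^+ N]qs -exprM mul1r.
  have -> : (N.+1 ^ 2 = N ^ 2 + N.+1 + N)%N by rewrite -!mulnn; lia.
  rewrite !exprD -IH0; ring.
have IH1 := IH t.+1; have IH2 := IH t.
case: (ltnP t N) => htN.
  have [d Hd] : exists d, N = (t + d.+1)%N by exists (N - t.+1)%N; lia.
  rewrite Hd in IH1 IH2 *.
  have e1 : (t + d.+1 - t.+1 = d)%N by lia.
  have e2 : (t + d.+1 - t = d.+1)%N by lia.
  have -> : ((t + d.+1).+1 - t.+1 = d.+1)%N by lia.
  rewrite e2 in IH2. rewrite e1 in IH1.
  have -> : ((Pq q (t + d.+1))`_t.+1 * q ^+ (t + d.+1) - (Pq q (t + d.+1))`_t) *
    s ^+ (t + d.+1).+1 = q ^+ (t + d.+1) * s * ((Pq q (t + d.+1))`_t.+1 * s ^+ (t + d.+1))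
     - s * ((Pq q (t + d.+1))`_t * s ^+ (t + d.+1)) by rewrite exprS; ring.
  rewrite IH1 IH2 !qs -!exprM.
  have -> : (2 * (t + d.+1) = t + t + d + d + 2)%N by lia.
  have -> : (2 * t.+1 = t + t + 2)%N by lia.
  have -> : (d.+1 ^ 2 = d ^ 2 + d + d + 1)%N by rewrite -!mulnn; lia.
  rewrite !exprD !exprS !expr0; ring.
have -> : ((Pq q N)`_t.+1 * q ^+ N - (Pq q N)`_t) * s ^+ N.+1 =
   q ^+ N * s * ((Pq q N)`_t.+1 * s ^+ N) - s * ((Pq q N)`_t * s ^+ N) by rewrite exprS; ring.
rewrite IH1 IH2 (@gb_gt _ q N t.+1) ?ltnS //.
case: (eqVneq t N) => [->|ne].
  rewrite subnn subSS subnn gb_nn /= !exprS; ring.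
rewrite (@gb_gt _ q N t); last by rewrite ltn_neqAle eq_sym ne.
ring.
Qed.

Lemma size_Pq (C : numClosedFieldType) (q : C) N : (size (Pq q N) <= N.+1)%N.
Proof.
elim: N => [|N IH]; first by rewrite /Pq big_ord0 size_poly1.
rewrite /Pq big_ord_recr /= -/(Pq q N).
apply: leq_trans (size_mul_leq _ _) _.
have -> : (q ^+ N)%:P - 'X = - ('X - (q ^+ N)%:P) :> {poly C} by rewrite opprB.
rewrite size_polyN size_XsubC addn2 /=.
by [].
Qed.

Lemma QBT (C : numClosedFieldType) (q : C) N : (0 < N)%N ->
  \sum_(t < N.+1) gb q N t * (-1) ^+ t * sqrtC q ^+ ((N - t) ^ 2 + t) = 0.
Proof.
move=> hN.
under eq_bigr do rewrite -Pq_coef.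
rewrite -big_distrl /=.
have -> : \sum_(i < N.+1) (Pq q N)`_i = (Pq q N).[1].
  rewrite (horner_coef_wide _ (size_Pq q N)).
  by apply: eq_bigr => i _; rewrite expr1n mulr1.
case: N hN => // N _.
by rewrite /Pq horner_prod big_ord_recl /= !hornerE expr0 subrr !mul0r.
Qed.

Lemma inversion (C : numClosedFieldType) (q : C) n : 0 < q -> q < 1 ->
  'X^n = \sum_(j < n.+1) (gb q n j * sqrtC q ^+ ((n - j) ^ 2)) *: OPUC (rs_alpha q) j.
Proof.
move=> h0 h1.
apply/polyP => k.
rewrite coefXn coef_sum.
under eq_bigr do rewrite coefZ Phi_coef //.
case: (ltnP n k) => hnk.
  rewrite big1; first by rewrite (gtn_eqF hnk).
  move=> j _; rewrite (@gb_gt _ q j k) ?mul0r ?mulr0 //.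
  exact: leq_trans (ltn_ord j) hnk.
rewrite -(big_mkord xpredT (fun j => gb q n j * sqrtC q ^+ ((n - j) ^ 2) *
   (gb q j k * (- sqrtC q) ^+ (j - k)))).
rewrite (@big_cat_nat _ _ _ k 0 n.+1) //=; last by apply: leqW.
rewrite big_nat_cond big1 ?add0r; last first.
  move=> j /andP[/andP[_ hj] _]; by rewrite (@gb_gt _ q j k) ?mul0r ?mulr0.
rewrite -{2}[k]add0n big_addn (subSn hnk) big_mkord.
under eq_bigr => j _.
  rewrite !(addnC j k).
  have R : gb q n (k + j) * gb q (k + j) k = gb q n k * gb q (n - k) j.
    by apply: gb_rev => //; have := ltn_ord j; lia.
  rewrite addKn subnDA.
  have -> : gb q n (k + j) * sqrtC q ^+ ((n - k - j) ^ 2) * (gb q (k + j) k * (- sqrtC q) ^+ j)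
     = (gb q n (k + j) * gb q (k + j) k) * (sqrtC q ^+ ((n - k - j) ^ 2) * (- sqrtC q) ^+ j) by ring.
  rewrite R exprNn.
  have -> : gb q n k * gb q (n - k) j * (sqrtC q ^+ ((n - k - j) ^ 2) * ((-1) ^+ j * sqrtC q ^+ j))
     = gb q n k * (gb q (n - k) j * (-1) ^+ j * sqrtC q ^+ ((n - k - j) ^ 2 + j)) by rewrite exprD; ring.
  over.
rewrite -big_distrr /=.
case: (ltnP k n) => hkn.
  by rewrite QBT ?subn_gt0 // mulr0 ltn_eqF.
have -> : k = n by lia.
by rewrite eqxx subnn big_ord1 gb_nn /= !mul1r expr0.
Qed.

Lemma ipL_wide (C : numClosedFieldType) (c : int -> C) (f g : {poly C}) N : (size g <= N)%N ->
  ipL c f g = \sum_(i < size f) \sum_(j < N) f`_i * (g`_j)^* * c (i%:Z - j%:Z).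
Proof.
move=> hN; rewrite /ipL; apply: eq_bigr => i _.
rewrite (big_ord_widen N (fun j => f`_i * (g`_j)^* * c (i%:Z - j%:Z)) hN) big_mkcond.
apply: eq_bigr => j _; case: ifP => // /negbT; rewrite -leqNgt => hj.
by rewrite (nth_default _ hj) rmorph0 mulr0 mul0r.
Qed.

Lemma ipL_add (C : numClosedFieldType) (c : int -> C) (f g h : {poly C}) :
  ipL c f (g + h) = ipL c f g + ipL c f h.
Proof.
set N := maxn (size g) (size h).
rewrite (@ipL_wide _ c f (g + h) N); last first.
  by apply: leq_trans (size_polyD _ _) _.
rewrite (@ipL_wide _ c f g N) ?leq_maxl // (@ipL_wide _ c f h N) ?leq_maxr //.
rewrite -big_split /=; apply: eq_bigr => i _.
rewrite -big_split /=; apply: eq_bigr => j _.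
by rewrite coefD rmorphD /=; ring.
Qed.

Lemma ipL_scale (C : numClosedFieldType) (c : int -> C) (f : {poly C}) (a : C) (g : {poly C}) :
  ipL c f (a *: g) = a^* * ipL c f g.
Proof.
rewrite (@ipL_wide _ c f (a *: g) (size g)) ?size_scale_leq //.
rewrite /ipL big_distrr /=; apply: eq_bigr => i _.
rewrite big_distrr /=; apply: eq_bigr => j _.
by rewrite coefZ rmorphM /=; ring.
Qed.

Lemma ipL_sum (C : numClosedFieldType) (c : int -> C) (f : {poly C}) K (a : nat -> C) (g : nat -> {poly C}) :
  ipL c f (\sum_(j < K) a j *: g j) = \sum_(j < K) (a j)^* * ipL c f (g j).
Proof.
elim: K => [|K IH].
  by rewrite !big_ord0 /ipL size_poly0 big1 // => i _; rewrite big_ord0.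
by rewrite !big_ord_recr /= ipL_add IH ipL_scale.
Qed.

Lemma num_lemma (C : numClosedFieldType) (q : C) d m :
  \prod_(i < m) (1 - q ^+ (d + m - i)) * qf q d = qf q (d + m).
Proof.
elim: m => [|m IH]; first by rewrite big_ord0 mul1r addn0.
rewrite big_ord_recl subn0.
under eq_bigr do rewrite /bump /= addnS subSS.
rewrite addnS qfS -IH; ring.
Qed.

Lemma qbinom_gb (C : numClosedFieldType) (q : C) n m : 0 < q -> q < 1 -> (m <= n)%N ->
  qbinom q n m = gb q n m.
Proof.
move=> h0 h1 hm.
have den : \prod_(i < m) (1 - q ^+ (m - i)) = qf q m.
  rewrite -(big_mkord xpredT (fun i => 1 - q ^+ (m - i))) big_rev_mkord subn0 /qf.
  apply: eq_bigr => i _.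
  by rewrite subKn // ltn_ord.
have [d Hd] : exists d, n = (d + m)%N by exists (n - m)%N; lia.
have num := num_lemma q d m.
rewrite /qbinom den gb_div // -Hd in num *.
have -> : (n - m = d)%N by lia.
rewrite -num.
have := qf_neq0 d h0 h1; have := qf_neq0 m h0 h1.
by move=> H1 H2; field; rewrite H1 H2.
Qed.

Lemma qbinom_gt (C : numClosedFieldType) (q : C) n m : (n < m)%N -> qbinom q n m = 0.
Proof.
move=> hm; rewrite /qbinom (bigD1 (Ordinal hm)) //= subnn expr0 subrr !mul0r.
by [].
Qed.

Theorem proposition4p13 (C : numClosedFieldType) (q : C)
    (hq0 : 0 < q) (hq1 : q < 1) (c : int -> C)
    (hL1 : c 0 = 1)
    (hort : exists kappa : nat -> C,
        (forall n, 0 < kappa n) /\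
        (forall m n, ipL c (OPUC (rs_alpha q) m) (OPUC (rs_alpha q) n)
                     = if m == n then kappa n else 0))
    (n m : nat) :
  moment c (rs_alpha q) n m
    = qbinom q n m * (sqrtC q) ^+ (`|(n%:Z - m%:Z)%R|%N ^ 2).
Proof.
have [kappa [kpos hk]] := hort.
have qr : q \is Num.real by apply: gtr0_real.
rewrite /moment /gmoment /= mulr1 (inversion n hq0 hq1).
rewrite (ipL_sum c _ n.+1 (fun j => gb q n j * sqrtC q ^+ ((n - j) ^ 2)) (fun j => OPUC (rs_alpha q) j)) hk eqxx.
have kn0 : kappa m != 0 by rewrite gt_eqF.
case: (ltnP m n.+1) => hm.
  rewrite (bigD1 (Ordinal hm)) //= hk eqxx big1 ?addr0; last first.
    move=> j hj; rewrite hk.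
    case: eqP => [E|]; last by rewrite mulr0.
    by move: hj; rewrite -(inj_eq val_inj) /= E eqxx.
  rewrite mulfK // conj_Creal; last first.
    by rewrite rpredM ?rpredX ?gb_real // sqrtC_real // ltW.
  by rewrite qbinom_gb // distnEl.
rewrite big1; last first.
  move=> j _; rewrite hk.
  case: eqP => [E|]; last by rewrite mulr0.
  by have := ltn_ord j; rewrite -E ltnNge hm.
by rewrite mul0r qbinom_gt // mul0r.
Qed.
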